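(* Let $\mathcal V$ be a finite vocabulary, $L\ge 1$ a sequence length, and $p_{\mathrm{data}}$ a distribution on $\mathcal V^L$ that factorizes over positions: $$p_{\mathrm{data}}(x)=\prod_{i=1}^{L} q^i_{x^i},$$ where each $q^i$ is a probability distribution on $\mathcal V$. Suppose the diffusion language model $p_\theta$ is optimally trained in the sense that for every partially masked sequence $x_t$ and every masked position $i$ of $x_t$, $p_\theta(x_0^i=v\mid x_t)=q^i_v$ for all $v\in\mathcal V$. Let $p_{\mathrm{lcr}}$ and $p_{\mathrm{dlcr}}$ be the distributions on $\mathcal V^L$ of the sequences produced (starting from the fully masked sequence) by low-confidence remasking and by dynamic low-confidence remasking with any threshold $\tau\in(0,1]$, respectively, as defined in the context. Then $$\mathcal H(p_{\mathrm{lcr}})\le \mathcal H(p_{\mathrm{data}}),\qquad \mathcal H(p_{\mathrm{dlcr}})\le \mathcal H(p_{\mathrm{data}}),$$ where $\mathcal H$ denotes the Shannon entropy of a distribution on $\mathcal V^L$.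
   Context: Superscripts index positions in a sequence of length $L$ over vocabulary $\mathcal V$; there is an extra mask symbol. The positions $1,\dots,L$ are partitioned into consecutive blocks of length $B$ (with $B$ dividing $L$), and blocks are generated one after another from left to right; generation of a block starts only after every position of the previous block has been decoded. Generation starts from the fully masked sequence. At each denoising step with current partially decoded sequence $x_t$, for every still-masked position $i$ in the current block one independently samples a token $y^i\sim p_\theta(x_0^i=\cdot\mid x_t)$ and assigns it confidence $c^i=p_\theta(x_0^i=y^i\mid x_t)$. Low-confidence remasking (with number of steps equal to block length, so one token per step): the single masked position of the current block with the highest confidence is set to its sampled token $y^i$, and all other masked positions remain masked (their samples are discarded). Dynamic low-confidence remasking with threshold $\tau$: the position with the highest confidence is decoded, and in addition every masked position in the current block whose confidence strictly exceeds $\tau$ is set to its sampled token; all remaining positions stay masked. Ties in confidence are broken by a fixed deterministic order. Low-confidence remasking coincides with dynamic low-confidence remasking with $\tau=1$. *)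

(* Defs.v *)
From HB Require Import structures.
From mathcomp Require Import all_boot all_order all_algebra all_fingroup.
From mathcomp Require Import reals exp.
Set Implicit Arguments. Unset Strict Implicit. Unset Printing Implicit Defensive.
Import Order.TTheory GRing.Theory Num.Theory.
Local Open Scope ring_scope.

(* Positions are 'I_L (0-indexed); position i lies in block i %/ B.
   A partially decoded sequence is a state : 'I_L -> option V, with None = mask. *)
Definition state (V : finType) (L : nat) := {ffun 'I_L -> option V}.

Section Generation.
Variables (R : realType) (V : finType) (L B : nat).
(* fixed deterministic tie-breaking order: smaller [sigma i] wins *)
Variable sigma : {perm 'I_L}.
(* thr = None : low-confidence remasking; thr = Some tau : dynamic, threshold tau *)
Variable thr : option R.
(* the model: ptheta x i v = p_theta(x_0^i = v | x_t = x) *)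
Variable ptheta : state V L -> 'I_L -> V -> R.

(* masked positions of the current block, i.e. of the leftmost block that
   still contains a masked position *)
Definition cur_block (x : state V L) : {set 'I_L} :=
  [set i | (x i == None) &&
           [forall j : 'I_L, (x j == None) ==> (i %/ B <= j %/ B)%N]].

(* probability of the vector of samples y (y i = Some y^i for i in the
   current block, None elsewhere); samples are independent *)
Definition sample_weight (x y : state V L) : R :=
  \prod_(i : 'I_L)
     (if i \in cur_block x then (if y i is Some v then ptheta x i v else 0)
      else (if y i is None then 1 else 0)).

Definition conf (x y : state V L) (i : 'I_L) : R :=
  if y i is Some v then ptheta x i v else 0.

Definition is_best (x y : state V L) (i : 'I_L) : bool :=
  [forall j in cur_block x,
     (conf x y j < conf x y i) ||
     ((conf x y j == conf x y i) && (sigma i <= sigma j)%N)].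

Definition decoded (x y : state V L) : {set 'I_L} :=
  [set i in cur_block x |
     is_best x y i || (if thr is Some tau then tau < conf x y i else false)].

Definition update (x y : state V L) : state V L :=
  [ffun i => if i \in decoded x y then y i else x i].

Definition step (d : state V L -> R) : state V L -> R :=
  fun x' => \sum_(x : state V L) d x *
              \sum_(y : state V L) sample_weight x y * (update x y == x')%:R.

Definition fully_masked : state V L := [ffun _ => None].

Definition init_dist : state V L -> R := fun x => (x == fully_masked)%:R.

(* Each step decodes at least one position while masks remain, and is the
   identity on fully decoded sequences; so L steps finish generation. *)
Definition gen_dist (z : {ffun 'I_L -> V}) : R :=
  iter L step init_dist [ffun i => Some (z i)].

End Generation.

Definition p_lcr (R : realType) (V : finType) (L B : nat) (sigma : {perm 'I_L})
  (ptheta : state V L -> 'I_L -> V -> R) : {ffun 'I_L -> V} -> R :=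
  gen_dist B sigma None ptheta.

Definition p_dlcr (R : realType) (V : finType) (L B : nat) (sigma : {perm 'I_L})
  (tau : R) (ptheta : state V L -> 'I_L -> V -> R) : {ffun 'I_L -> V} -> R :=
  gen_dist B sigma (Some tau) ptheta.

Definition p_data (R : realType) (V : finType) (L : nat) (q : 'I_L -> V -> R)
  : {ffun 'I_L -> V} -> R :=
  fun z => \prod_(i : 'I_L) q i (z i).

Definition entropy (R : realType) (T : finType) (p : T -> R) : R :=
  - \sum_(t : T) (if p t == 0 then 0 else p t * ln (p t)).

(* Main.v *)
Require Import Defs.
From HB Require Import structures.
From mathcomp Require Import all_boot all_order all_algebra all_fingroup.
From mathcomp Require Import reals exp.
From mathcomp Require Import ring lra zify.
Import Order.TTheory GRing.Theory Num.Theory.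
Local Open Scope ring_scope.
Set Implicit Arguments. Unset Strict Implicit.

Section Proof.
Variables (R : realType) (V : finType) (L B : nat).
Variable (q : 'I_L -> V -> R).
Hypothesis hq0 : forall i v, 0 <= q i v.
Hypothesis hq1 : forall i, \sum_(v : V) q i v = 1.
Variable ptheta : state V L -> 'I_L -> V -> R.
Hypothesis hopt : forall (x : state V L) (i : 'I_L), x i = None ->
            forall v, ptheta x i v = q i v.
Variables (sigma : {perm 'I_L}) (thr : option R).

Local Notation st := (state V L).
Local Notation sw := (sample_weight B ptheta).
Local Notation upd := (update B sigma thr ptheta).
Local Notation dec := (decoded B sigma thr ptheta).
Local Notation stp := (step B sigma thr ptheta).
Local Notation cur := (@cur_block V L B).

Lemma cur_None x i : i \in cur x -> x i = None.
Proof. by rewrite inE => /andP[/eqP]. Qed.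

Lemma sum_option (F : option V -> R) :
  \sum_(o : option V) F o = F None + \sum_(v : V) F (Some v).
Proof.
rewrite (bigD1 None) //=; congr (_ + _).
rewrite (reindex_omap Some id) //=; last by case=> // v _.
by apply: eq_bigl => v; rewrite eqxx.
Qed.

Lemma sum_eqF (T : finType) (u : T) (f : T -> R) :
  \sum_(x : T) (u == x)%:R * f x = f u.
Proof.
rewrite (bigD1 u) //= eqxx mul1r big1 ?addr0 // => x /negbTE.
by rewrite eq_sym => ->; rewrite mul0r.
Qed.

Lemma sum_eqF' (T : finType) (u : T) (f : T -> R) :
  \sum_(x : T) (x == u)%:R * f x = f u.
Proof. by rewrite -(sum_eqF u); apply: eq_bigr => x _; rewrite eq_sym. Qed.

Lemma sum_eq1 (T : finType) (u : T) : \sum_(x : T) ((x == u)%:R : R) = 1.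
Proof.
by rewrite -[RHS](sum_eqF' u (fun _ => 1)); apply: eq_bigr => x _; rewrite mulr1.
Qed.

Definition swf (x : st) (i : 'I_L) (o : option V) : R :=
  if i \in cur x then (if o is Some v then ptheta x i v else 0)
  else (if o is None then 1 else 0).

Lemma swf_ge0 x i o : 0 <= swf x i o.
Proof.
rewrite /swf; case: ifP => Hi; case: o => // v.
by rewrite hopt ?cur_None.
Qed.

Lemma sw_ge0 x y : 0 <= sw x y.
Proof. by apply: prodr_ge0 => i _; apply: swf_ge0. Qed.

Lemma sw_sum1 x : \sum_y sw x y = 1.
Proof.
rewrite /sample_weight -(bigA_distr_bigA (fun i o => swf x i o)).
apply: big1 => i _; rewrite sum_option /swf.
case: ifP => Hi.
  by rewrite add0r (eq_bigr (fun v => q i v)) ?hq1 // => v _; rewrite hopt ?cur_None.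
by rewrite big1 ?addr0.
Qed.

Lemma step_expect (d : st -> R) (f : st -> R) :
  \sum_x' stp d x' * f x' = \sum_x d x * \sum_y sw x y * f (upd x y).
Proof.
rewrite /step.
under eq_bigr => x' _ do rewrite mulr_suml.
rewrite exchange_big /=; apply: eq_bigr => x _.
under eq_bigr => x' _ do rewrite -mulrA mulr_suml.
rewrite -mulr_sumr; congr (_ * _).
rewrite exchange_big /=; apply: eq_bigr => y _.
under eq_bigr => x' _ do rewrite -mulrA.
by rewrite -mulr_sumr sum_eqF.
Qed.

Local Notation cf := (conf ptheta).

Lemma best_exists x y i0 : i0 \in cur x ->
  exists i, (i \in cur x) && is_best B sigma ptheta x y i.
Proof.
move=> Hi0.
pose ord := fun i j : 'I_L =>
  (cf x y j < cf x y i) || ((cf x y j == cf x y i) && (sigma i <= sigma j)%N).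
have refl : reflexive ord by move=> i; rewrite /ord eqxx leqnn orbT.
have trans : transitive ord.
  move=> j i k; rewrite /ord => /orP[H1|/andP[/eqP H1 H1']] /orP[H2|/andP[/eqP H2 H2']].
  - by rewrite (lt_trans H2 H1).
  - by rewrite H2 H1.
  - by rewrite -H1 H2.
  - by rewrite H2 H1 eqxx (leq_trans H1' H2') orbT.
have tot : total ord.
  move=> i j; rewrite /ord; case: (ltgtP (cf x y i) (cf x y j)) => //= H.
  by rewrite leq_total.
have := @extremumP _ _ ord i0 (mem (cur x)) id refl trans tot Hi0.
case=> i Pi Hi; exists i; rewrite [_ \in _]Pi /=.
by apply/forall_inP => j Hj; apply: Hi.
Qed.

Lemma dec_sub x y i : i \in dec x y -> i \in cur x.
Proof. by rewrite inE => /andP[]. Qed.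

Lemma dec_nonempty x y i0 : i0 \in cur x -> exists i, i \in dec x y.
Proof.
move=> /(best_exists y) [i /andP[Hc Hb]]; exists i.
by rewrite inE Hc Hb.
Qed.

Lemma dec_mono (x y y' : st) (i : 'I_L) : (forall j, j != i -> y' j = y j) ->
  cf x y' i < cf x y i -> i \in dec x y' -> i \in dec x y.
Proof.
move=> Hy Hlt; rewrite !inE => /andP[Hc H]; rewrite Hc /=.
have Hcj j : j != i -> cf x y' j = cf x y j by move=> /Hy; rewrite /conf => ->.
case/orP: H => [Hb|Ht].
  apply/orP; left; rewrite /is_best; apply/forall_inP => j Hj.
  move: Hb; rewrite /is_best => /forall_inP Hb.
  have := Hb j Hj.
  case: (eqVneq j i) => [->|Hji]; first by move=> _; rewrite eqxx leqnn orbT.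
  rewrite Hcj // => /orP[H|/andP[/eqP H _]].
    by rewrite (lt_trans H Hlt).
  by rewrite H Hlt.
apply/orP; right; move: Ht; case: thr => // tau Ht.
exact: lt_trans Ht Hlt.
Qed.


Definition h i := \sum_v q i v * ln (q i v).
Definition psi i (o : option V) := if o is Some v then ln (q i v) else h i.
Definition Psi (x : st) := \sum_i psi i (x i).
Definition setc (y : st) i (o : option V) : st :=
  [ffun j => if j == i then o else y j].
Definition phi i (p : st * V) : st * V :=
  if p.1 i is Some u then (setc p.1 i (Some p.2), u) else p.

Lemma phiK i : involutive (phi i).
Proof.
case=> y v; rewrite /phi /=; case E: (y i) => [u|] /=; last by rewrite E.
rewrite /setc ffunE eqxx /=; congr (_, _).
by apply/ffunP => j; rewrite !ffunE; case: eqP => [->|//]; rewrite E.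
Qed.

Lemma sw_split x y i : sw x y = swf x i (y i) * \prod_(j | j != i) swf x j (y j).
Proof. by rewrite /sample_weight (bigD1 i). Qed.

Lemma rest_setc x y i o :
  \prod_(j | j != i) swf x j (setc y i o j) = \prod_(j | j != i) swf x j (y j).
Proof. by apply: eq_bigr => j /negbTE Hj; rewrite /setc ffunE Hj. Qed.

Lemma sign_lem (a c : R) (b b' : bool) : 0 <= a -> 0 <= c ->
  (a < c -> b -> b') -> (c < a -> b' -> b) ->
  0 <= a * c * ((b%:R - b'%:R) * (ln a - ln c)).
Proof.
move=> ha hc H1 H2.
case: (eqVneq a 0) => [->|na]; first by rewrite !mul0r.
case: (eqVneq c 0) => [->|nc]; first by rewrite mulr0 mul0r.
have pa : 0 < a by rewrite lt_def na ha.
have pc : 0 < c by rewrite lt_def nc hc.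
apply: mulr_ge0; first by apply: mulr_ge0; apply: ltW.
case: (ltgtP a c) => Hac.
- have Hl : ln a < ln c by rewrite ltr_ln // posrE.
  have := H1 Hac; clear H1 H2; case: b; case: b' => /= H; [by rewrite subrr mul0r|by have := H isT|lra|by rewrite subrr mul0r].
- have Hl : ln c < ln a by rewrite ltr_ln // posrE.
  have := H2 Hac; clear H1 H2; case: b; case: b' => /= H; [by rewrite subrr mul0r|lra|by have := H isT|by rewrite subrr mul0r].
- by rewrite Hac subrr mulr0.
Qed.


Lemma swf_cur x i o : i \in cur x ->
  swf x i o = if o is Some v then q i v else 0.
Proof. by move=> Hc; rewrite /swf Hc; case: o => // v; rewrite hopt ?cur_None. Qed.

Lemma key x i : 0 <= \sum_y sw x y * ((i \in dec x y)%:R * (psi i (y i) - h i)).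
Proof.
case Hc: (i \in cur x); last first.
  apply: sumr_ge0 => y _.
  have: i \notin dec x y by apply/negP => /dec_sub; rewrite Hc.
  by move/negbTE => ->; rewrite mul0r mulr0.
pose T (p : st * V) := sw x p.1 * (i \in dec x p.1)%:R * q i p.2 *
                         (psi i (p.1 i) - ln (q i p.2)).
have E1 : \sum_y sw x y * ((i \in dec x y)%:R * (psi i (y i) - h i)) =
          \sum_p T p.
  rewrite -(pair_bigA _ (fun y v => T (y, v))) /=.
  apply: eq_bigr => y _; rewrite /T /=.
  under eq_bigr => v _ do rewrite -mulrA.
  rewrite -mulr_sumr mulrA; congr (_ * _).
  under eq_bigr => v _ do rewrite mulrBr.
  by rewrite sumrB -mulr_suml hq1 mul1r /h.
have E2 : \sum_p T p = \sum_p T (phi i p) by rewrite (reindex_inj (inv_inj (phiK i))).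
have H : 0 <= \sum_p T p + \sum_p T p.
  rewrite {2}E2 -big_split /=; apply: sumr_ge0 => -[y v] _.
  rewrite /phi /=; case E: (y i) => [u|]; last first.
    by rewrite /T /= (sw_split _ _ i) E swf_cur // !mul0r addr0.
  rewrite /T /= (sw_split x y i) (sw_split x (setc y i (Some v)) i) rest_setc.
  rewrite E {3}/setc ffunE eqxx /= !swf_cur //.
  set Rr := \prod_(j | j != i) _.
  set D := (i \in dec x y); set D' := (i \in dec x (setc y i (Some v))).
  have -> : q i u * Rr * D%:R * q i v * (ln (q i u) - ln (q i v)) +
    q i v * Rr * D'%:R * q i u * (ln (q i v) - ln (q i u)) =
    Rr * (q i u * q i v * ((D%:R - D'%:R) * (ln (q i u) - ln (q i v)))) by ring.
  apply: mulr_ge0; first by apply: prodr_ge0 => j _; apply: swf_ge0.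
  have Hyy j : j != i -> setc y i (Some v) j = y j by move=> /negbTE Hj; rewrite /setc ffunE Hj.
  have Hc1 : cf x y i = q i u by rewrite /conf E hopt ?cur_None.
  have Hc2 : cf x (setc y i (Some v)) i = q i v by rewrite /conf /setc ffunE eqxx hopt ?cur_None.
  apply: sign_lem => //.
  - move=> Hlt; apply: dec_mono; first by move=> j /Hyy.
    by rewrite Hc1 Hc2.
  - move=> Hlt; apply: dec_mono; first by move=> j /Hyy ->.
    by rewrite Hc1 Hc2.
rewrite E1; lra.
Qed.


Lemma upd_val x y i : upd x y i = if i \in dec x y then y i else x i.
Proof. by rewrite /update ffunE. Qed.

Lemma Psi_step x : Psi x <= \sum_y sw x y * Psi (upd x y).
Proof.
rewrite -subr_ge0.
have -> : \sum_y sw x y * Psi (upd x y) - Psi x =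
  \sum_i \sum_y sw x y * ((i \in dec x y)%:R * (psi i (y i) - h i)).
  rewrite exchange_big /=.
  rewrite [X in _ - X](_ : _ = \sum_y sw x y * Psi x); last first.
    by rewrite -mulr_suml sw_sum1 mul1r.
  rewrite -sumrB.
  apply: eq_bigr => y _; rewrite -mulrBr -mulr_sumr; congr (_ * _).
  rewrite /Psi -sumrB; apply: eq_bigr => i _; rewrite upd_val.
  case: ifP => Hd.
    by rewrite (cur_None (dec_sub Hd)) /= mul1r.
  by rewrite mul0r subrr.
by apply: sumr_ge0 => i _; apply: key.
Qed.

Lemma step_ge0 d : (forall x, 0 <= d x) -> forall x, 0 <= stp d x.
Proof.
move=> Hd x'; apply: sumr_ge0 => x _; apply: mulr_ge0 => //.
by apply: sumr_ge0 => y _; apply: mulr_ge0; [apply: sw_ge0|apply: ler0n].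
Qed.

Lemma step_mass d : \sum_x stp d x = \sum_x d x.
Proof.
have := step_expect d (fun _ => 1).
under eq_bigr => x _ do rewrite mulr1.
move=> ->; apply: eq_bigr => x _.
under eq_bigr => y _ do rewrite mulr1.
by rewrite sw_sum1 mulr1.
Qed.

Lemma step_Psi d : (forall x, 0 <= d x) ->
  \sum_x d x * Psi x <= \sum_x stp d x * Psi x.
Proof.
move=> Hd; rewrite step_expect; apply: ler_sum => x _.
by apply: ler_wpM2l => //; apply: Psi_step.
Qed.


Definition masked (x : st) : {set 'I_L} := [set i | x i == None].
Definition good (k : nat) (x : st) : bool :=
  (#|masked x| <= L - k)%N && [forall i, if x i is Some v then 0 < q i v else true].

Lemma cur_exists (x : st) (i0 : 'I_L) : x i0 = None -> exists i, i \in cur x.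
Proof.
move=> /eqP Hi0.
case: (@arg_minnP _ i0 (fun i => x i == None) (fun i : 'I_L => (i %/ B)%N) Hi0).
move=> i Pi Hmin; exists i; rewrite inE Pi /=.
by apply/forallP => j; apply/implyP => Hj; apply: Hmin.
Qed.

Lemma sw_nz x y j : sw x y != 0 -> swf x j (y j) != 0.
Proof.
move=> H; apply/negP => /eqP Hj; move/eqP: H; apply.
by apply/eqP/prodf_eq0; exists j => //; apply/eqP.
Qed.

Lemma upd_good k x y : good k x -> sw x y != 0 -> good k.+1 (upd x y).
Proof.
case/andP => Hcard Hsupp Hsw.
have Hy j : j \in cur x -> exists v, y j = Some v /\ 0 < q j v.
  move=> Hj; have := sw_nz j Hsw; rewrite swf_cur //; case: (y j) => [v Hv|]; last by rewrite eqxx.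
  by exists v; split => //; rewrite lt_def Hv hq0.
have Hsub : masked (upd x y) \subset masked x.
  apply/subsetP => i; rewrite !inE upd_val; case: ifP => // Hd /eqP Hn.
  by have [v [Hv _]] := Hy i (dec_sub Hd); rewrite Hv in Hn.
apply/andP; split.
  case: (pickP (fun i => x i == None)) => [i0 /eqP Hi0 | Hnone].
    have [i1 Hi1] := cur_exists Hi0.
    have [i Hi] := dec_nonempty y Hi1.
    have Hprop : masked (upd x y) \proper masked x.
      apply/properP; split => //; exists i.
        by rewrite inE; apply/eqP; apply: cur_None (dec_sub Hi).
      rewrite inE upd_val Hi; have [v [Hv _]] := Hy i (dec_sub Hi).
      by rewrite Hv.
    have := proper_card Hprop; move: Hcard; lia.
  have H0 : #|masked x| = 0%N.
    apply/eqP; rewrite cards_eq0; apply/eqP/setP => i; rewrite !inE Hnone //.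
  have := subset_leq_card Hsub; rewrite H0; lia.
apply/forallP => i; rewrite upd_val; case: ifP => Hd.
  by have [v [Hv Hq]] := Hy i (dec_sub Hd); rewrite Hv.
by move/forallP: Hsupp => /(_ i).
Qed.

Lemma step_good d k : (forall x, d x != 0 -> good k x) ->
  forall x', stp d x' != 0 -> good k.+1 x'.
Proof.
move=> Hd x'; apply: contraR => Hng; apply/eqP.
rewrite /step; apply: big1 => x _.
case: (eqVneq (d x) 0) => [->|Hdx]; first by rewrite mul0r.
rewrite big1 ?mulr0 // => y _.
case: (eqVneq (sw x y) 0) => [->|Hsw]; first by rewrite mul0r.
case: eqP => [Hu|_]; last by rewrite mulr0.
by move: Hng; rewrite -Hu (upd_good (Hd x Hdx) Hsw).
Qed.

Local Notation init := (@init_dist R V L).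

Lemma iter_props k : let d := iter k stp init in
  [/\ (forall x, 0 <= d x), \sum_x d x = 1, (forall x, d x != 0 -> good k x)
    & \sum_i h i <= \sum_x d x * Psi x].
Proof.
elim: k => [|k [IH1 IH2 IH3 IH4]] /=.
  split.
  - by move=> x; rewrite /init_dist ler0n.
  - by rewrite /init_dist sum_eq1.
  - move=> x; rewrite /init_dist; case: (eqVneq x (fully_masked V L)) => [->|Hx]; last by rewrite eqxx.
    move=> _; apply/andP; split.
      by rewrite subn0; apply: leq_trans (max_card _) _; rewrite card_ord.
    by apply/forallP => i; rewrite /fully_masked ffunE.
  - rewrite /init_dist sum_eqF' /Psi; rewrite le_eqVlt; apply/orP; left; apply/eqP; apply: eq_bigr => i _.
    by rewrite /fully_masked ffunE.
split.
- exact: step_ge0.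
- by rewrite step_mass.
- exact: step_good.
- by apply: le_trans IH4 _; apply: step_Psi.
Qed.


Definition emb (z : {ffun 'I_L -> V}) : st := [ffun i => Some (z i)].
Definition S (z : {ffun 'I_L -> V}) : R := \sum_i ln (q i (z i)).

Lemma full_reindex (v0 : V) (d : st -> R) (f : st -> R) :
  (forall x, d x != 0 -> good L x) ->
  \sum_x d x * f x = \sum_(z : {ffun 'I_L -> V}) d (emb z) * f (emb z).
Proof.
move=> H.
rewrite (bigID (fun x : st => [forall i, x i != None])) /=.
rewrite [X in _ + X]big1 ?addr0; last first.
  move=> x Hx; case: (eqVneq (d x) 0) => [->|Hd]; first by rewrite mul0r.
  have /andP[Hc _] := H x Hd; rewrite subnn leqn0 cards_eq0 in Hc.
  move/forallPn: Hx => [i]; rewrite negbK => Hi.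
  by move/eqP: Hc => /setP /(_ i); rewrite !inE Hi.
have Hk : forall x : st, [forall i, x i != None] ->
    emb [ffun i => odflt v0 (x i)] = x.
  move=> x /forallP Hx; apply/ffunP => i; rewrite !ffunE.
  by move: (Hx i); case: (x i).
rewrite (reindex_onto emb (fun x : st => [ffun i => odflt v0 (x i)]) Hk).
apply: eq_bigl => z; apply/andP; split.
  by apply/forallP => i; rewrite ffunE.
by apply/eqP/ffunP => i; rewrite !ffunE.
Qed.

Lemma ln_prod (I : finType) (F : I -> R) : (forall i, 0 < F i) ->
  ln (\prod_i F i) = \sum_i ln (F i).
Proof.
move=> HF.
suff : 0 < \prod_i F i /\ ln (\prod_i F i) = \sum_i ln (F i) by case.
apply: (big_rec2 (fun a b => 0 < a /\ ln a = b)).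
  by rewrite ln1.
move=> i a b _ [Ha Hb]; split; first by apply: mulr_gt0.
by rewrite lnM ?posrE // Hb.
Qed.

Lemma gibbs (p r : R) : 0 < p -> 0 < r -> p * ln r + p - r <= p * ln p.
Proof.
move=> hp hr.
have H : ln (1 + (r / p - 1)) <= r / p - 1.
  apply: le_ln1Dx; rewrite ltrBrDr addrC subrr; exact: divr_gt0.
rewrite addrC subrK ln_div ?posrE // in H.
have := ler_wpM2l (ltW hp) H.
have -> : p * (r / p - 1) = r - p by field; rewrite gt_eqF.
lra.
Qed.

Lemma marg i (g : V -> R) :
  \sum_(z : {ffun 'I_L -> V}) (\prod_j q j (z j)) * g (z i) = \sum_v q i v * g v.
Proof.
have E z : (\prod_j q j (z j)) * g (z i) =
    \prod_j (if j == i then q j (z j) * g (z j) else q j (z j)).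
  rewrite (bigD1 i) //= [RHS](bigD1 i) //= eqxx mulrAC; congr (_ * _).
  by apply: eq_bigr => j /negbTE ->.
under eq_bigr => z _ do rewrite E.
rewrite -(bigA_distr_bigA (fun j v => if j == i then q j v * g v else q j v)).
rewrite (bigD1 i) //= [X in _ * X]big1 ?mulr1; first by apply: eq_bigr => v _; rewrite eqxx.
by move=> j /negbTE ->; exact: hq1.
Qed.

Lemma pd_sum : \sum_(z : {ffun 'I_L -> V}) \prod_j q j (z j) = 1.
Proof.
rewrite -(bigA_distr_bigA (fun j v => q j v)).
by apply: big1 => j _; apply: hq1.
Qed.

Lemma entropy_pd : entropy (p_data q) = - \sum_i h i.
Proof.
rewrite /entropy /p_data; congr (- _).
transitivity (\sum_(z : {ffun 'I_L -> V}) (\prod_j q j (z j)) * S z).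
  apply: eq_bigr => z _; case: eqP => [->|/eqP Hz]; first by rewrite mul0r.
  rewrite ln_prod // => j; rewrite lt_def hq0 andbT.
  by apply/negP => /eqP Hj; move/eqP: Hz; apply; apply/eqP/prodf_eq0; exists j => //; apply/eqP.
rewrite /S; under eq_bigr => z _ do rewrite mulr_sumr.
rewrite exchange_big /=; apply: eq_bigr => i _.
by rewrite (marg i (fun v => ln (q i v))).
Qed.

Theorem gen_entropy (v0 : V) :
  entropy (gen_dist B sigma thr ptheta) <= entropy (p_data q).
Proof.
have [H1 H2 H3 H4] := iter_props L.
set d := iter L stp init in H1 H2 H3 H4.
have Hp : gen_dist B sigma thr ptheta = (fun z => d (emb z)) by [].
have Hmass : \sum_z d (emb z) = 1.
  have := @full_reindex v0 d (fun _ => 1) H3.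
  under eq_bigr => x _ do rewrite mulr1.
  rewrite H2 => ->; by apply: eq_bigr => z _; rewrite mulr1.
have HPsi : \sum_i h i <= \sum_z d (emb z) * S z.
  rewrite (@full_reindex v0 d Psi H3) in H4; apply: le_trans H4 _.
  rewrite le_eqVlt; apply/orP; left; apply/eqP.
  apply: eq_bigr => z _; congr (_ * _); rewrite /Psi /S.
  by apply: eq_bigr => i _; rewrite ffunE.
rewrite entropy_pd Hp /entropy lerN2; apply: le_trans HPsi _.
have E : \sum_z (d (emb z) * S z + d (emb z) - \prod_j q j (z j)) =
         \sum_z d (emb z) * S z.
  by rewrite sumrB big_split /= Hmass pd_sum addrK.
rewrite -E; apply: ler_sum => z _ /=.
case: (eqVneq (d (emb z)) 0) => [->|Ep].
  rewrite mul0r add0r sub0r oppr_le0.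
  by apply: prodr_ge0 => j _; apply: hq0.
have Hs i : 0 < q i (z i).
  have /andP[_ /forallP Hs] := H3 _ Ep.
  by have := Hs i; rewrite ffunE.
have pp : 0 < d (emb z) by rewrite lt_def Ep H1.
have Hpd : 0 < \prod_j q j (z j) by apply: prodr_gt0 => j _; apply: Hs.
have -> : S z = ln (\prod_j q j (z j)) by rewrite ln_prod.
exact: gibbs.
Qed.

End Proof.

Unset Implicit Arguments. Set Strict Implicit.

Theorem mainTheorem1 (R : realType) (V : finType) (L B : nat)
  (hL : (0 < L)%N) (hB : (0 < B)%N) (hBL : (B %| L)%N)
  (q : 'I_L -> V -> R)
  (hq0 : forall i v, 0 <= q i v)
  (hq1 : forall i, \sum_(v : V) q i v = 1)
  (ptheta : state V L -> 'I_L -> V -> R)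
  (hopt : forall (x : state V L) (i : 'I_L), x i = None ->
            forall v, ptheta x i v = q i v)
  (sigma : {perm 'I_L}) (tau : R) (htau : 0 < tau <= 1) :
  entropy (p_lcr B sigma ptheta) <= entropy (p_data q) /\
  entropy (p_dlcr B sigma tau ptheta) <= entropy (p_data q).
Proof.
have [v0 _] : exists v : V, true.
  case: (pickP (fun _ : V => true)) => [v _|H0]; first by exists v.
  have := hq1 (Ordinal hL); rewrite big_pred0 // => /eqP.
  by rewrite eq_sym oner_eq0.
split.
- exact: (@gen_entropy R V L B q hq0 hq1 ptheta hopt sigma None v0).
- exact: (@gen_entropy R V L B q hq0 hq1 ptheta hopt sigma (Some tau) v0).
Qed.
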